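(* If $G$ is a triangle-free graph with minimum degree $\delta(G)\ge 3$, then ${\rm gp}_{\rm d}(G)=0$.
   Context: For $S\subseteq V(G)$, two vertices $u,v$ are $S$-positionable if every shortest $u,v$-path $P$ satisfies $V(P)\cap S\subseteq\{u,v\}$. $S$ is a general position set if every two vertices of $S$ are $S$-positionable, and $S$ is a dual general position set if it is a general position set and every two vertices $u,v\in V(G)\setminus S$ are $S$-positionable. ${\rm gp}_{\rm d}(G)$ is the maximum size of a dual general position set of $G$. *)

(* Defs.v *)
From mathcomp Require Import all_boot.
From mathcomp Require Import boolp.
Set Implicit Arguments. Unset Strict Implicit. Unset Printing Implicit Defensive.

Definition simple_graph (T : finType) (e : rel T) : Prop :=
  symmetric e /\ irreflexive e.

(* A u,v-walk is encoded by the sequence p of vertices after u: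
   the walk is u :: p, it has length size p and ends at last u p. *)
Definition walk (T : finType) (e : rel T) (u v : T) (p : seq T) : bool :=
  path e u p && (last u p == v).

(* A shortest u,v-path: a u,v-walk with no strictly shorter u,v-walk
   (such a walk is automatically a path, i.e. has no repeated vertices). *)
Definition shortest_path (T : finType) (e : rel T) (u v : T) (p : seq T) : Prop :=
  walk e u v p /\ forall q : seq T, walk e u v q -> size p <= size q.

Definition positionable (T : finType) (e : rel T) (S : {set T}) (u v : T) : Prop :=
  forall p : seq T, shortest_path e u v p ->
    forall x, x \in u :: p -> x \in S -> (x == u) || (x == v).

Definition general_position (T : finType) (e : rel T) (S : {set T}) : Prop :=
  forall u v, u \in S -> v \in S -> u != v -> positionable e S u v.

Definition dual_general_position (T : finType) (e : rel T) (S : {set T}) : Prop :=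
  general_position e S /\
  forall u v, u \notin S -> v \notin S -> u != v -> positionable e S u v.

Definition gpd (T : finType) (e : rel T) : nat :=
  \max_(S : {set T} | `[< dual_general_position e S >]) #|S|.

Definition triangle_free (T : finType) (e : rel T) : Prop :=
  forall x y z, e x y -> e y z -> e x z -> False.

Definition degree (T : finType) (e : rel T) (x : T) : nat := #|[set y | e x y]|.

Definition min_degree_ge (T : finType) (e : rel T) (k : nat) : Prop :=
  forall x : T, k <= degree e x.

(* Main.v *)
Require Import Defs.
From mathcomp Require Import zify.
From mathcomp Require Import all_boot.
From mathcomp Require Import boolp.

Lemma sp2 (T : finType) (e : rel T) a x b :
  triangle_free e -> e a x -> e x b -> a != b -> shortest_path e a b [:: x; b].
Proof.
move=> tf hax hxb hab; split.
  by rewrite /walk /= hax hxb eqxx.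
case=> [|y [|z q]] //=; rewrite /walk /=.
  by rewrite (negbTE hab).
by rewrite andbT => /andP [hay /eqP eyb]; subst y; case: (tf a x b).
Qed.

Theorem mainTheorem9 (T : finType) (e : rel T) :
  simple_graph e -> triangle_free e -> min_degree_ge e 3 ->
  gpd e = 0.
Proof.
move=> [sym irr] tf md.
rewrite /gpd big1 // => S /asboolP [gp dgp].
apply/eqP; rewrite cards_eq0; apply/eqP/setP => x; rewrite inE.
apply/negP => xS.
set N := [set y | e x y].
have hN : 3 <= #|N| by apply: md.
have key : forall a b, a \in N -> b \in N -> a != b ->
    positionable e S a b -> False.
  move=> a b; rewrite !inE => hxa hxb hab pos.
  have hax : e a x by rewrite sym.
  have := pos _ (@sp2 T e a x b tf hax hxb hab) x.
  rewrite !inE eqxx orbT => /(_ isT xS) /orP [] /eqP ex.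
    by subst a; rewrite irr in hax.
  by subst b; rewrite irr in hxb.
have := cardsID S N.
case: (ltnP 1 #|N :&: S|) => [h1 | h1] hc.
  move/card_gt1P: h1 => [a [b [ha hb hab]]].
  move: ha hb; rewrite !in_setI => /andP [aN aS] /andP [bN bS].
  exact: (key a b aN bN hab (gp a b aS bS hab)).
have h2 : 1 < #|N :\: S|.
  by lia.
move/card_gt1P: h2 => [a [b [ha hb hab]]].
move: ha hb; rewrite !in_setD => /andP [aS aN] /andP [bS bN].
exact: (key a b aN bN hab (dgp a b aS bS hab)).
Qed.
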